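(* Let $\mathbb{T}=\mathbb{R}/2\pi\mathbb{Z}$. For $j=1,\dots,m$ let $c_j\in C^\infty(\mathbb{T};\mathbb{C})$ and let $P_j(D_x)$ be a pseudo-differential operator on $\mathbb{T}^n$, $P_j(D_x)u(x)=\sum_{\xi\in\mathbb{Z}^n}e^{ix\cdot\xi}p_j(\xi)\widehat{u}(\xi)$, with $|p_j(\xi)|\le C|\xi|^{\nu_j}$ for all $\xi\in\mathbb{Z}^n$ (some $C>0$, $\nu_j\in\mathbb{R}$). Let $L_j=D_t+c_j(t)P_j(D_x)$ on $\mathbb{T}^{n+1}$, $L=L_1\circ\cdots\circ L_m$, and $\mathcal{M}_j(t,\xi)=c_j(t)p_j(\xi)$. Assume that for each $j$ there is a positive constant $\eta_j$ with $\operatorname{Im}\mathcal{M}_j(t,\xi)\ge-\eta_j$ for all $t\in\mathbb{T}$, $\xi\in\mathbb{Z}^n$. Suppose that for some $k\in\{1,\dots,m\}$ there is a singular solution $u_k$ of $L_k$, i.e. $u_k\in\mathcal{D}'(\mathbb{T}^{n+1})\setminus C^\infty(\mathbb{T}^{n+1})$ with $L_ku_k\in C^\infty(\mathbb{T}^{n+1})$, and distributions $u_{k+1},\dots,u_m\in\mathcal{D}'(\mathbb{T}^{n+1})$ satisfying $$u_{k+j}=L_{k+j+1}u_{k+j+1},\qquad j\in\{0,\dots,m-k-1\}.$$ Then $L$ is not globally hypoelliptic.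
   Context: $D_t=-i\partial_t$; $\widehat{u}(\xi)=(2\pi)^{-n}\int_{\mathbb{T}^n}e^{-ix\cdot\xi}u(x)\,dx$. An operator $\mathcal{P}$ on $\mathbb{T}^N$ is globally hypoelliptic if $u\in\mathcal{D}'(\mathbb{T}^N)$ and $\mathcal{P}u\in C^\infty(\mathbb{T}^N)$ imply $u\in C^\infty(\mathbb{T}^N)$. *)

(* Defs.v *)
From Stdlib Require Import Reals Lra Lia ZArith.
From Stdlib Require Vector.
From Coquelicot Require Import Coquelicot.
Open Scope R_scope.

(* Periodic distributions on T^N are identified with their Fourier
   coefficients (convention hat u(xi) = (2pi)^{-N} int e^{-ix.xi} u):
   D'(T^N)  <->  sequences on Z^N of at most polynomial growth,
   C^oo(T^N) <-> rapidly decreasing sequences on Z^N.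
   A distribution on T^{n+1} = T_t x T^n_x is a function of (tau, xi). *)

Definition Zn (n : nat) := Vector.t Z n.

Definition znorm {n : nat} (xi : Zn n) : R :=
  sqrt (Vector.fold_right (fun a s => IZR a ^ 2 + s) xi 0).

Definition bracket {n : nat} (tau : Z) (xi : Zn n) : R :=
  sqrt (1 + IZR tau ^ 2 + znorm xi ^ 2).

Definition FSeq (n : nat) := Z -> Zn n -> C.

Definition is_distr {n : nat} (u : FSeq n) : Prop :=
  exists (K : R) (N : nat), 0 < K /\
    forall tau xi, Cmod (u tau xi) <= K * bracket tau xi ^ N.

Definition is_smooth {n : nat} (u : FSeq n) : Prop :=
  forall N : nat, exists K : R,
    forall tau xi, Cmod (u tau xi) * bracket tau xi ^ N <= K.

(* c in C^oo(T;C), given by its Fourier coefficients (rapidly decreasing) *)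
Definition smooth_coeffs (c : Z -> C) : Prop :=
  forall N : nat, exists K : R,
    forall tau, Cmod (c tau) * sqrt (1 + IZR tau ^ 2) ^ N <= K.

(* sum over Z (for absolutely summable families) *)
Definition zsum (f : Z -> C) : C :=
  (Series (fun k => Re (f (Z.of_nat k))) + Series (fun k => Re (f (- Z.of_nat (S k))%Z)),
   Series (fun k => Im (f (Z.of_nat k))) + Series (fun k => Im (f (- Z.of_nat (S k))%Z))).

Definition cexpi (tau : Z) (t : R) : C := (cos (IZR tau * t), sin (IZR tau * t)).

Definition ceval (c : Z -> C) (t : R) : C :=
  zsum (fun tau => Cmult (c tau) (cexpi tau t)).

(* Symbol bound |p(xi)| <= K |xi|^nu, for all xi in Z^n, with the
   convention 0^nu = 0 (nu>0), 1 (nu=0), +oo (nu<0). *)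
Definition symbol_bound {n : nat} (K nu : R) (p : Zn n -> C) : Prop :=
  forall xi : Zn n,
    (znorm xi <> 0 -> Cmod (p xi) <= K * Rpower (znorm xi) nu) /\
    (znorm xi = 0 -> (0 < nu -> p xi = RtoC 0) /\ (nu = 0 -> Cmod (p xi) <= K)).

(* L_j = D_t + c_j(t) P_j(D_x) on Fourier side:
   (L u)^(tau,xi) = tau u^(tau,xi) + p(xi) sum_s c^(tau - s) u^(s,xi). *)
Definition Lop {n : nat} (c : Z -> C) (p : Zn n -> C) (u : FSeq n) : FSeq n :=
  fun tau xi =>
    Cplus (Cmult (RtoC (IZR tau)) (u tau xi))
          (Cmult (p xi) (zsum (fun s => Cmult (c (tau - s)%Z) (u s xi)))).

(* Lcomp c p m = L_1 o L_2 o ... o L_m *)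
Fixpoint Lcomp {n : nat} (c : nat -> Z -> C) (p : nat -> Zn n -> C) (m : nat)
  : FSeq n -> FSeq n :=
  match m with
  | O => fun u => u
  | S m' => fun u => Lcomp c p m' (Lop (c m) (p m) u)
  end.

Definition globally_hypoelliptic {n : nat} (A : FSeq n -> FSeq n) : Prop :=
  forall u : FSeq n, is_distr u -> is_smooth (A u) -> is_smooth u.

(* Main.v *)
Require Import Defs.
From Stdlib Require Import Reals ZArith Lra Lia Psatz.
From Stdlib Require Vector.
From Coquelicot Require Import Coquelicot.
Open Scope R_scope.
Definition ainv (k : nat) : R := / (1 + INR k ^ 2).

Lemma ainv_pos k : 0 < ainv k.
Proof. unfold ainv. apply Rinv_0_lt_compat. pose proof (pos_INR k). nra. Qed.

Lemma ainv_partial n : sum_f_R0 ainv n <= 4 - 4 / (INR n + 2).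
Proof.
  induction n as [|n IH].
  - simpl. unfold ainv. simpl. lra.
  - simpl sum_f_R0. rewrite S_INR.
    pose proof (pos_INR n) as Hn.
    assert (ainv (S n) <= 4 / (INR n + 2) - 4 / (INR n + 1 + 2)).
    { unfold ainv. rewrite S_INR.
      replace (4 / (INR n + 2) - 4 / (INR n + 1 + 2)) with (/ ((INR n + 2) * (INR n + 3) / 4)) by (field; lra).
      apply Rinv_le_contravar. nra. nra. }
    lra.
Qed.

Lemma ex_series_ainv : ex_series ainv.
Proof.
  destruct (growing_cv (sum_f_R0 ainv)) as [l Hl].
  - intro n. simpl. pose proof (ainv_pos (S n)). lra.
  - exists 4. intros x [n ->]. pose proof (ainv_partial n).
    assert (0 < 4 / (INR n + 2)). { pose proof (pos_INR n). apply Rdiv_lt_0_compat; lra. }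
    lra.
  - exists l. apply is_series_Reals. exact Hl.
Qed.

Lemma series_bound (x b : nat -> R) : (forall k, Rabs (x k) <= b k) -> ex_series b ->
  Rabs (Series x) <= Series b.
Proof.
  intros H Hb.
  assert (Ha : ex_series (fun k => Rabs (x k))).
  { apply (@ex_series_le R_AbsRing R_CompleteNormedModule (fun k => Rabs (x k)) b); auto. intro k. change (Rabs (Rabs (x k)) <= b k). rewrite Rabs_Rabsolu. auto. }
  eapply Rle_trans. apply Series_Rabs. exact Ha.
  apply Series_le; auto. intro k; split; auto. apply Rabs_pos.
Qed.

Lemma Cmod_le_sum (z : C) : Cmod z <= Rabs (Re z) + Rabs (Im z).
Proof.
  assert (H2 : Cmod z ^ 2 <= (Rabs (Re z) + Rabs (Im z)) ^ 2).
  { rewrite Cmod2_alt. rewrite <- (pow2_abs (Re z)), <- (pow2_abs (Im z)).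
    pose proof (Rabs_pos (Re z)); pose proof (Rabs_pos (Im z)). nra. }
  pose proof (Cmod_ge_0 z). pose proof (Rabs_pos (Re z)); pose proof (Rabs_pos (Im z)).
  destruct (Rle_dec (Cmod z) (Rabs (Re z) + Rabs (Im z))); auto. nra.
Qed.

Lemma im_le_Cmod (z : C) : Rabs (Im z) <= Cmod z.
Proof. pose proof (Rmax_Cmod z). pose proof (Rmax_r (Rabs (fst z)) (Rabs (snd z))). unfold Im. lra. Qed.

Lemma zsum_bound (g : Z -> C) (D : R) : 0 <= D ->
  (forall s, Cmod (g s) <= D * / (1 + IZR s ^ 2)) ->
  Cmod (zsum g) <= 4 * D * Series ainv.
Proof.
  intros HD H.
  assert (Hb : ex_series (fun k => D * ainv k)).
  { apply ex_series_scal_l with (c := D) (a := ainv). apply ex_series_ainv. }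
  assert (HS : Series (fun k => D * ainv k) = D * Series ainv) by apply Series_scal_l.
  assert (H1 : forall k, Cmod (g (Z.of_nat k)) <= D * ainv k).
  { intro k. specialize (H (Z.of_nat k)). rewrite <- INR_IZR_INZ in H. exact H. }
  assert (H2 : forall k, Cmod (g (- Z.of_nat (S k))%Z) <= D * ainv k).
  { intro k. eapply Rle_trans. apply H. apply Rmult_le_compat_l; auto. unfold ainv.
    apply Rinv_le_contravar. pose proof (pos_INR k). nra.
    rewrite opp_IZR, <- INR_IZR_INZ, S_INR. pose proof (pos_INR k). nra. }
  unfold zsum. eapply Rle_trans. apply Cmod_le_sum. unfold Re, Im; simpl fst; simpl snd.
  assert (forall (x : nat -> R), (forall k, Rabs (x k) <= D * ainv k) -> Rabs (Series x) <= D * Series ainv).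
  { intros x Hx. rewrite <- HS. apply series_bound; auto. }
  pose proof (H3 := H0 (fun k => Re (g (Z.of_nat k))) (fun k => Rle_trans _ _ _ (re_le_Cmod _) (H1 k))).
  pose proof (H4 := H0 (fun k => Re (g (- Z.of_nat (S k))%Z)) (fun k => Rle_trans _ _ _ (re_le_Cmod _) (H2 k))).
  pose proof (H5 := H0 (fun k => Im (g (Z.of_nat k))) (fun k => Rle_trans _ _ _ (im_le_Cmod _) (H1 k))).
  pose proof (H6 := H0 (fun k => Im (g (- Z.of_nat (S k))%Z)) (fun k => Rle_trans _ _ _ (im_le_Cmod _) (H2 k))).
  simpl in H3, H4, H5, H6.
  pose proof (Rabs_triang (Series (fun k => Re (g (Z.of_nat k)))) (Series (fun k => Re (g (- Z.of_nat (S k))%Z)))).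
  pose proof (Rabs_triang (Series (fun k => Im (g (Z.of_nat k)))) (Series (fun k => Im (g (- Z.of_nat (S k))%Z)))).
  unfold Re, Im in *. simpl fst in *; simpl snd in *. lra.
Qed.

Definition sumsq {n} (xi : Zn n) : R := Vector.fold_right (fun a s => IZR a ^ 2 + s) xi 0.

Lemma sumsq_cons a {n} (v : Zn n) : sumsq (Vector.cons _ a n v) = IZR a ^ 2 + sumsq v.
Proof. reflexivity. Qed.

Lemma sumsq_int {n} (xi : Zn n) : exists z, sumsq xi = IZR z /\ (0 <= z)%Z.
Proof.
  induction xi as [|a n v IH].
  - exists 0%Z. split; [reflexivity|lia].
  - destruct IH as [z [Hz Hz0]]. exists (a*a + z)%Z. rewrite sumsq_cons, Hz.
    split. rewrite plus_IZR, mult_IZR. ring. nia.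
Qed.

Lemma sumsq_nonneg {n} (xi : Zn n) : 0 <= sumsq xi.
Proof. destruct (sumsq_int xi) as [z [-> H]]. apply IZR_le. exact H. Qed.

Lemma sumsq_zero {n} (xi : Zn n) : sumsq xi = 0 -> xi = Vector.const 0%Z n.
Proof.
  induction xi as [|a n v IH]; intro H.
  - reflexivity.
  - rewrite sumsq_cons in H. pose proof (sumsq_nonneg v).
    assert (IZR a ^ 2 = 0) by nra. assert (sumsq v = 0) by nra.
    assert (a = 0%Z). { apply eq_IZR. nra. }
    subst. simpl. f_equal. apply IH; auto.
Qed.

Lemma znorm_sq {n} (xi : Zn n) : znorm xi ^ 2 = sumsq xi.
Proof. unfold znorm. rewrite pow2_sqrt; [reflexivity| apply sumsq_nonneg]. Qed.

Lemma znorm_nonneg {n} (xi : Zn n) : 0 <= znorm xi.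
Proof. apply sqrt_pos. Qed.

Lemma znorm_ge1 {n} (xi : Zn n) : znorm xi <> 0 -> 1 <= znorm xi.
Proof.
  intro H. destruct (sumsq_int xi) as [z [Hz Hz0]].
  assert (z <> 0%Z). { intro; subst. apply H. unfold znorm. fold (sumsq xi). rewrite Hz. apply sqrt_0. }
  assert (1 <= sumsq xi). { rewrite Hz. apply IZR_le. lia. }
  rewrite <- sqrt_1. unfold znorm. apply sqrt_le_1_alt. exact H1.
Qed.

Lemma znorm_zero {n} (xi : Zn n) : znorm xi = 0 -> xi = Vector.const 0%Z n.
Proof. intro H. apply sumsq_zero. rewrite <- znorm_sq, H. ring. Qed.

Lemma bracket_sq {n} tau (xi : Zn n) : bracket tau xi ^ 2 = 1 + IZR tau ^ 2 + znorm xi ^ 2.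
Proof. unfold bracket. rewrite pow2_sqrt; [reflexivity|]. pose proof (pow2_ge_0 (IZR tau)). pose proof (pow2_ge_0 (znorm xi)). lra. Qed.

Lemma bracket_nonneg {n} tau (xi : Zn n) : 0 <= bracket tau xi.
Proof. apply sqrt_pos. Qed.

Lemma sq_le x y : 0 <= y -> x ^ 2 <= y ^ 2 -> x <= y.
Proof. intros. destruct (Rle_dec x y); auto. nra. Qed.

Lemma bracket_ge1 {n} tau (xi : Zn n) : 1 <= bracket tau xi.
Proof. apply sq_le. apply bracket_nonneg. rewrite bracket_sq. pose proof (pow2_ge_0 (IZR tau)). pose proof (pow2_ge_0 (znorm xi)). lra. Qed.

Lemma tau_le_bracket {n} tau (xi : Zn n) : Rabs (IZR tau) <= bracket tau xi.
Proof. apply sq_le. apply bracket_nonneg. rewrite bracket_sq, pow2_abs. pose proof (pow2_ge_0 (znorm xi)). lra. Qed.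

Lemma znorm_le_bracket {n} tau (xi : Zn n) : znorm xi <= bracket tau xi.
Proof. apply sq_le. apply bracket_nonneg. rewrite bracket_sq. pose proof (pow2_ge_0 (IZR tau)). lra. Qed.

Lemma s_le_bracket {n} s (xi : Zn n) : 1 + IZR s ^ 2 <= bracket s xi ^ 2.
Proof. rewrite bracket_sq. pose proof (pow2_ge_0 (znorm xi)). lra. Qed.

Lemma peetre {n} tau s (xi : Zn n) :
  bracket tau xi <= 2 * sqrt (1 + IZR (tau - s) ^ 2) * bracket s xi.
Proof.
  assert (Hd : 0 <= 1 + IZR (tau - s) ^ 2) by (pose proof (pow2_ge_0 (IZR (tau - s))); lra).
  apply sq_le. pose proof (sqrt_pos (1 + IZR (tau - s) ^ 2)). pose proof (bracket_nonneg s xi). nra.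
  replace ((2 * sqrt (1 + IZR (tau - s) ^ 2) * bracket s xi) ^ 2) with
    (4 * (sqrt (1 + IZR (tau - s) ^ 2)) ^ 2 * bracket s xi ^ 2) by ring.
  rewrite pow2_sqrt by exact Hd. rewrite !bracket_sq. rewrite minus_IZR.
  set (t := IZR tau) in *. set (u := IZR s) in *. set (z := znorm xi).
  pose proof (pow2_ge_0 z). pose proof (pow2_ge_0 (t - u)). pose proof (pow2_ge_0 u).
  assert (0 <= (t-u)^2 * (u^2 + z^2)) by (apply Rmult_le_pos; lra).
  assert (t^2 <= 2*(t-u)^2 + 2*u^2) by (pose proof (pow2_ge_0 (t - 2*u)); assert (2*(t-u)^2+2*u^2 - t^2 = (t-2*u)^2) by ring; lra).
  nra.
Qed.

Lemma p_poly {n} K nu (p : Zn n -> C) : 0 < K -> symbol_bound K nu p ->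
  exists A M, 0 <= A /\ forall tau xi, Cmod (p xi) <= A * bracket tau xi ^ M.
Proof.
  intros HK Hs.
  set (M := Z.abs_nat (up nu)).
  assert (HM : nu <= INR M).
  { unfold M. rewrite INR_IZR_INZ, Zabs2Nat.id_abs. destruct (archimed nu) as [H1 _].
    rewrite abs_IZR. pose proof (Rle_abs (IZR (up nu))). lra. }
  exists (K + Cmod (p (Vector.const 0%Z n))), M. split.
  { pose proof (Cmod_ge_0 (p (Vector.const 0%Z n))). lra. }
  intros tau xi.
  pose proof (Cmod_ge_0 (p (Vector.const 0%Z n))).
  assert (Hb : 1 <= bracket tau xi ^ M). { apply pow_R1_Rle. apply bracket_ge1. }
  destruct (Req_dec (znorm xi) 0) as [H0|H0].
  - assert (Hpx : p xi = p (Vector.const 0%Z n)) by (rewrite (znorm_zero xi H0); reflexivity). rewrite Hpx. nra.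
  - destruct (Hs xi) as [Hs1 _]. specialize (Hs1 H0).
    pose proof (znorm_ge1 xi H0).
    assert (Rpower (znorm xi) nu <= bracket tau xi ^ M).
    { eapply Rle_trans. apply Rle_Rpower. exact H1. exact HM.
      rewrite Rpower_pow by lra. apply pow_incr. split. lra. apply znorm_le_bracket. }
    nra.
Qed.

Lemma Lop_smooth {n} (c : Z -> C) (p : Zn n -> C) K nu (f : FSeq n) :
  smooth_coeffs c -> 0 < K -> symbol_bound K nu p -> is_smooth f -> is_smooth (Lop c p f).
Proof.
  intros Hc HK Hs Hf N.
  destruct (p_poly K nu p HK Hs) as [A [M [HA HpA]]].
  destruct (Hc (M+N)%nat) as [Kc HKc].
  destruct (Hf (S N)) as [Kf1 HKf1].
  destruct (Hf (M+N+2)%nat) as [Kf2 HKf2].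
  set (B := 2^(M+N) * Kc * Kf2).
  exists (Kf1 + A * (4 * B * Series ainv)).
  intros tau xi.
  set (br := bracket tau xi).
  assert (Hbr1 : 1 <= br) by apply bracket_ge1.
  assert (HbrP : 0 < br ^ (M+N)) by (apply pow_lt; lra).
  assert (Key : forall s, Cmod (Cmult (c (tau - s)%Z) (f s xi)) <= (B / br ^ (M+N)) * / (1 + IZR s ^ 2)).
  { intro s. rewrite Cmod_mult.
    set (L := sqrt (1 + IZR (tau - s) ^ 2)).
    set (bs := bracket s xi).
    assert (HL : 0 <= L) by apply sqrt_pos.
    assert (Hbs : 0 <= bs) by apply bracket_nonneg.
    assert (Hs2 : 1 + IZR s ^ 2 <= bs ^ 2) by apply s_le_bracket.
    assert (Hq : 0 < 1 + IZR s ^ 2) by (pose proof (pow2_ge_0 (IZR s)); lra).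
    assert (Hpe : br ^ (M+N) <= 2^(M+N) * L^(M+N) * bs^(M+N)).
    { rewrite <- !Rpow_mult_distr. apply pow_incr. split. lra. apply peetre. }
    pose proof (HKc (tau - s)%Z) as H1. fold L in H1.
    pose proof (HKf2 s xi) as H2. fold bs in H2.
    rewrite pow_add in H2.
    pose proof (Cmod_ge_0 (c (tau - s)%Z)). pose proof (Cmod_ge_0 (f s xi)).
    assert (0 <= L ^ (M+N)) by (apply pow_le; lra).
    assert (0 <= bs ^ (M+N)) by (apply pow_le; lra).
    assert (0 <= 2 ^ (M+N)) by (apply pow_le; lra).
    set (cc := Cmod (c (tau - s)%Z)) in *. set (ff := Cmod (f s xi)) in *.
    assert (Hm : cc * ff * (br ^ (M+N) * (1 + IZR s ^ 2)) <= B).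
    { unfold B.
      apply Rle_trans with (cc * ff * ((2^(M+N) * L^(M+N) * bs^(M+N)) * bs ^ 2)).
      { apply Rmult_le_compat_l. apply Rmult_le_pos; lra.
        apply Rmult_le_compat; try lra. }
      replace (cc * ff * (2 ^ (M + N) * L ^ (M + N) * bs ^ (M + N) * bs ^ 2)) with
        (2 ^ (M+N) * (cc * L ^ (M+N)) * (ff * (bs ^ (M+N) * bs ^ 2))) by ring.
      assert (HX : 0 <= cc * L ^ (M+N)) by (apply Rmult_le_pos; lra).
      assert (HY : 0 <= ff * (bs ^ (M+N) * bs ^ 2)) by (apply Rmult_le_pos; [lra| apply Rmult_le_pos; [lra| apply pow2_ge_0]]).
      apply Rmult_le_compat; try lra.
      - apply Rmult_le_pos; lra.
      - apply Rmult_le_compat_l; lra. }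
    assert (HPQ : 0 < br ^ (M+N) * (1 + IZR s ^ 2)) by (apply Rmult_lt_0_compat; lra).
    replace (B / br ^ (M + N) * / (1 + IZR s ^ 2)) with (B * / (br ^ (M+N) * (1 + IZR s ^ 2))) by (field; lra).
    replace (cc * ff) with (cc * ff * (br ^ (M+N) * (1 + IZR s ^ 2)) * / (br ^ (M+N) * (1 + IZR s ^ 2))) by (field; lra).
    apply Rmult_le_compat_r. left. apply Rinv_0_lt_compat. exact HPQ. exact Hm. }
  assert (HB : 0 <= B / br ^ (M+N)).
  { pose proof (Key 0%Z). pose proof (Cmod_ge_0 (Cmult (c (tau - 0)%Z) (f 0%Z xi))).
    assert (0 < / (1 + IZR 0 ^ 2)) by (apply Rinv_0_lt_compat; simpl; lra). nra. }
  pose proof (zsum_bound _ _ HB Key) as HZ.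
  set (Z0 := zsum (fun s => Cmult (c (tau - s)%Z) (f s xi))) in *.
  assert (HZ2 : Cmod Z0 * br ^ (M+N) <= 4 * B * Series ainv).
  { replace (4 * B * Series ainv) with (4 * (B / br ^ (M+N)) * Series ainv * br ^ (M+N)) by (field; lra).
    apply Rmult_le_compat_r; lra. }
  unfold Lop. fold Z0.
  pose proof (Cmod_triangle (Cmult (RtoC (IZR tau)) (f tau xi)) (Cmult (p xi) Z0)).
  rewrite !Cmod_mult, Cmod_R in H.
  pose proof (tau_le_bracket tau xi) as Ht. fold br in Ht.
  pose proof (HKf1 tau xi) as H1. fold br in H1. simpl pow in H1.
  pose proof (HpA tau xi) as H2. fold br in H2.
  assert (0 <= br ^ N) by (apply pow_le; lra).
  assert (0 <= br ^ M) by (apply pow_le; lra).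
  pose proof (Cmod_ge_0 (f tau xi)). pose proof (Cmod_ge_0 Z0). pose proof (Cmod_ge_0 (p xi)).
  pose proof (Rabs_pos (IZR tau)).
  rewrite pow_add in HZ2.
  apply Rle_trans with ((Rabs (IZR tau) * Cmod (f tau xi) + Cmod (p xi) * Cmod Z0) * br ^ N).
  { apply Rmult_le_compat_r; lra. }
  rewrite Rmult_plus_distr_r. apply Rplus_le_compat.
  - apply Rle_trans with (Cmod (f tau xi) * (br * br ^ N)); [|lra].
    replace (Rabs (IZR tau) * Cmod (f tau xi) * br ^ N) with (Cmod (f tau xi) * (Rabs (IZR tau) * br ^ N)) by ring.
    apply Rmult_le_compat_l; [lra|]. apply Rmult_le_compat_r; lra.
  - apply Rle_trans with (A * br ^ M * Cmod Z0 * br ^ N).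
    + apply Rmult_le_compat_r; [lra|]. apply Rmult_le_compat_r; lra.
    + replace (A * br ^ M * Cmod Z0 * br ^ N) with (A * (Cmod Z0 * (br ^ M * br ^ N))) by ring.
      apply Rmult_le_compat_l; lra.
Qed.

Theorem theorem10 (n m : nat) (c : nat -> Z -> C) (p : nat -> Zn n -> C)
  (nu eta : nat -> R)
  (Hc : forall j, (1 <= j <= m)%nat -> smooth_coeffs (c j))
  (Hp : forall j, (1 <= j <= m)%nat -> exists K, 0 < K /\ symbol_bound K (nu j) (p j))
  (Heta : forall j, (1 <= j <= m)%nat ->
     0 < eta j /\ forall (t : R) (xi : Zn n), - eta j <= Im (Cmult (ceval (c j) t) (p j xi)))
  (k : nat) (Hk : (1 <= k <= m)%nat) (u : nat -> FSeq n)
  (Huk : is_distr (u k) /\ ~ is_smooth (u k) /\ is_smooth (Lop (c k) (p k) (u k)))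
  (Hui : forall i, (k < i <= m)%nat -> is_distr (u i))
  (Hrel : forall j, (k + j + 1 <= m)%nat ->
     u (k + j)%nat = Lop (c (k + j + 1)%nat) (p (k + j + 1)%nat) (u (k + j + 1)%nat)) :
  ~ globally_hypoelliptic (Lcomp c p m).
Proof.
  destruct Huk as [Hd [Hns Hsm]].
  assert (HL : forall j, (1 <= j <= m)%nat -> forall f, is_smooth f -> is_smooth (Lop (c j) (p j) f)).
  { intros j Hj f Hf. destruct (Hp j Hj) as [K [HK Hs]].
    exact (Lop_smooth (c j) (p j) K (nu j) f (Hc j Hj) HK Hs Hf). }
  assert (HC : forall i, (i <= m)%nat -> forall f, is_smooth f -> is_smooth (Lcomp c p i f)).
  { induction i as [|i IH]; intros Hi f Hf; simpl.
    - exact Hf.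
    - apply IH. lia. apply HL. lia. exact Hf. }
  assert (Hind : forall d, (k + d <= m)%nat ->
     ~ is_smooth (u (k + d)%nat) /\ Lcomp c p (k + d) (u (k + d)%nat) = Lcomp c p k (u k)).
  { induction d as [|d IH]; intro Hd'.
    - rewrite Nat.add_0_r. split; auto.
    - destruct (IH ltac:(lia)) as [IH1 IH2].
      pose proof (Hrel d ltac:(lia)) as Hr.
      replace (k + d + 1)%nat with (k + S d)%nat in Hr by lia.
      split.
      + intro Hs. apply IH1. rewrite Hr. apply HL. lia. exact Hs.
      + replace (k + S d)%nat with (S (k + d)) at 1 by lia. simpl Lcomp.
        replace (S (k + d)) with (k + S d)%nat by lia. rewrite <- Hr. exact IH2. }
  destruct (Hind (m - k)%nat ltac:(lia)) as [H1 H2].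
  replace (k + (m - k))%nat with m in H1, H2 by lia.
  intro HG. apply H1. apply HG.
  - destruct (Nat.eq_dec m k) as [E|E]. rewrite E. exact Hd. apply Hui. lia.
  - rewrite H2. destruct k as [|k']. lia. simpl Lcomp. apply HC. lia. exact Hsm.
Qed.
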